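(* Let $G$ be a finite, connected, simple, bridgeless, triangle-free cubic graph, let $\Lambda$ be a valid labeling of $\mathfrak{L}_2(G)$, and let $\gamma_1,\gamma_2\in\Gamma_\Lambda$ be non-adjacent cycles. Then there are finitely many reduced cliques $\mathbb{X}_1,\dots,\mathbb{X}_n\in\mathcal{X}$ such that, with $\Lambda'=(\mathcal{F}_{\mathbb{X}_1}\circ\cdots\circ\mathcal{F}_{\mathbb{X}_n})(\Lambda)$, we have $\gamma_1,\gamma_2\in\Gamma_{\Lambda'}$ and there is a cycle $\gamma_3\in\Gamma_{\Lambda'}$ adjacent to both $\gamma_1$ and $\gamma_2$.
   Context: $\mathcal{L}(H)$ is the line graph of $H$. Let $\mathcal{T}$ be the set of triangles of $\mathcal{L}(\mathcal{L}(G))$ formed by the three edges of a triangle of $\mathcal{L}(G)$. $\mathfrak{L}_2(G)$ has the vertex set of $\mathcal{L}(\mathcal{L}(G))$ and the edges of $\mathcal{L}(\mathcal{L}(G))$ not in any triangle of $\mathcal{T}$. For each edge $e$ of $G$, the reduced clique $\mathbb{X}_e$ is the subgraph of $\mathfrak{L}_2(G)$ on the four edges of $\mathcal{L}(G)$ incident to $e$, with all edges of $\mathfrak{L}_2(G)$ among them (a 4-cycle); $\mathcal{X}$ is the set of reduced cliques. A labeling $\Lambda$ gives each edge of $\mathfrak{L}_2(G)$ a label in $\{0,1\}$ ($1$ = open); it is valid if in every reduced clique each vertex is incident to two edges of that clique with different labels. $\Gamma_\Lambda$ is the set of connected components (cycles, viewed as subgraphs) of the subgraph formed by open edges. Two cycles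 $\gamma,\phi\in\Gamma_\Lambda$ are adjacent if some reduced clique contains an edge of $\gamma$ and an edge of $\phi$. The label inversion $\mathcal{F}_{\mathbb{X}}(\Lambda)$ is obtained from $\Lambda$ by replacing $\lambda_f$ with $1-\lambda_f$ for each edge $f$ of $\mathbb{X}$, other labels unchanged; it is again a valid labeling. *)

(* Defs.v *)
From mathcomp Require Import all_boot.
Set Implicit Arguments. Unset Strict Implicit. Unset Printing Implicit Defensive.

(* A simple graph on a finite type T is a symmetric irreflexive relation r.
   Its edges are the 2-element sets {x,y} with r x y. *)
Definition is_edge (T : finType) (r : rel T) (s : {set T}) : bool :=
  [exists x, exists y, r x y && (s == [set x; y])].

(* Line graph: vertices are the edges of (T, r) (elements of {set T} that are
   not edges are isolated and never used), two distinct edges adjacent iff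
   they share an endpoint. *)
Definition line_rel (T : finType) (r : rel T) : rel {set T} :=
  fun e f => [&& is_edge r e, is_edge r f, e != f & (e :&: f != set0)].

Section Frak.
Variables (V : finType) (adj : rel V).

(* E1 = edges of G = vertices of L(G);
   E2 = edges of L(G) = vertices of L(L(G)) = vertices of frak L_2(G);
   E3 = edges of L(L(G)). *)
Definition LG := line_rel adj.
Definition LLG := line_rel (line_rel adj).

Definition L2_vertex (x : {set {set V}}) : bool := is_edge LG x.

(* E is an edge of L(L(G)) lying in a triangle of calT, i.e. one of the three
   edges {{a,b},{b,c}} of the L(L(G))-triangle formed by the three edges of a
   triangle {a,b,c} of L(G). *)
Definition in_calT (E : {set {set {set V}}}) : bool :=
  [exists a, exists b, exists c,
     [&& LG a b, LG b c, LG a c & E == [set [set a; b]; [set b; c]]]].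

Definition L2_edge (E : {set {set {set V}}}) : bool :=
  is_edge LLG E && ~~ in_calT E.

Definition clique_verts (e : {set V}) : {set {set {set V}}} :=
  [set x | L2_vertex x & e \in x].
Definition clique_edges (e : {set V}) : {set {set {set {set V}}}} :=
  [set E | L2_edge E & E \subset clique_verts e].

(* A labeling assigns a label in {0,1} (false/true, true = open) to each edge
   of frak L_2(G); values on non-edges are irrelevant. *)
Definition labeling := {set {set {set V}}} -> bool.

Definition valid (L : labeling) : Prop :=
  forall e, is_edge adj e -> forall x, x \in clique_verts e ->
    exists f1, exists f2,
      [/\ f1 \in clique_edges e, f2 \in clique_edges e,
          x \in f1, x \in f2 & L f1 != L f2].

Definition open_rel (L : labeling) : rel {set {set V}} :=
  fun x y => L2_edge [set x; y] && L [set x; y].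

Definition subgraph := ({set {set {set V}}} * {set {set {set {set V}}}})%type.

Definition in_Gamma (L : labeling) (g : subgraph) : Prop :=
  exists x, [/\ L2_vertex x,
    g.1 = [set y | connect (open_rel L) x y] &
    g.2 = [set E | [&& L2_edge E, L E & E \subset g.1]]].

Definition cyc_adjacent (g h : subgraph) : Prop :=
  exists e, [/\ is_edge adj e,
    exists2 f1, f1 \in g.2 & f1 \in clique_edges e &
    exists2 f2, f2 \in h.2 & f2 \in clique_edges e].

Definition flip (e : {set V}) (L : labeling) : labeling :=
  fun E => if E \in clique_edges e then ~~ L E else L E.

Definition flips (es : seq {set V}) (L : labeling) : labeling :=
  foldr flip L es.

End Frak.

Definition simple_graph (V : finType) (adj : rel V) : Prop :=
  (forall u v, adj u v = adj v u) /\ (forall u, ~~ adj u u).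
Definition connected_graph (V : finType) (adj : rel V) : Prop :=
  forall u v, connect adj u v.
Definition bridgeless (V : finType) (adj : rel V) : Prop :=
  forall u v, adj u v ->
    connect (fun x y => adj x y && ([set x; y] != [set u; v])) u v.
Definition triangle_free (V : finType) (adj : rel V) : Prop :=
  forall x y z, ~~ [&& adj x y, adj y z & adj x z].
Definition cubic (V : finType) (adj : rel V) : Prop :=
  forall v, #|[set w | adj v w]| = 3.

(* Main.v *)
Require Import Defs.
Require Stdlib.Logic.Classical_Prop.
From mathcomp Require Import all_boot.
Set Implicit Arguments. Unset Strict Implicit. Unset Printing Implicit Defensive.

Lemma set2_inj (T : finType) (a b c d : T) :
  [set a; b] = [set c; d] -> (a = c /\ b = d) \/ (a = d /\ b = c).
Proof.
move=> E.
have ha : a \in [set c; d] by rewrite -E set21.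
have hb : b \in [set c; d] by rewrite -E set22.
have hc : c \in [set a; b] by rewrite E set21.
have hd : d \in [set a; b] by rewrite E set22.
move: ha hb hc hd; rewrite !inE.
by do 4 (case/orP=> /eqP ?); subst; auto.
Qed.

Lemma handshake (T : finType) (r : rel T) (C : {set T}) :
  symmetric r -> irreflexive r ->
  ~~ odd (\sum_(x in C) #|[set y in C | r x y]|).
Proof.
move=> rs ri.
pose f x y := ((x \in C) && (y \in C) && r x y : nat).
have E1 : \sum_(x in C) #|[set y in C | r x y]| = \sum_x \sum_y f x y.
  rewrite [RHS](bigID (fun x => x \in C)) /=.
  rewrite [X in _ + X]big1 ?addn0; last first.
    by move=> x /negbTE xC; rewrite big1 // => y _; rewrite /f xC.
  apply: eq_bigr => x xC.
  rewrite -sum1_card.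
  rewrite [RHS](bigID (fun y => (y \in C) && r x y)) /= [X in _ + X]big1 ?addn0.
    apply: eq_big => y; first by rewrite inE.
    by rewrite inE => /andP[yC rxy]; rewrite /f xC yC rxy.
  by move=> y /negbTE; rewrite /f xC /= => ->.
pose g x y := if enum_rank x < enum_rank y then f x y else 0.
have E2 : forall x y, f x y = g x y + g y x.
  move=> x y; rewrite /g.
  case: (ltngtP (enum_rank x) (enum_rank y)) => H.
  - by rewrite addn0.
  - by rewrite add0n /f [r x y]rs; case: (x \in C); case: (y \in C).
  - have xy : x = y by apply: enum_rank_inj; apply: val_inj.
    by rewrite xy /f ri !andbF.
have E3 : \sum_x \sum_y f x y = (\sum_x \sum_y g x y) + \sum_x \sum_y g x y.
  rewrite [X in _ = _ + X]exchange_big -big_split /=; apply: eq_bigr => x _.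
  by rewrite -big_split /=; apply: eq_bigr => y _.
by rewrite E1 E3 addnn odd_double.
Qed.

Lemma set2C (T : finType) (a b : T) : [set a; b] = [set b; a].
Proof. exact: setUC. Qed.

Lemma closure_connect (T : finType) (r1 r2 : rel T) (S : {set T}) x :
  x \in S -> (forall p q, p \in S -> r1 p q -> (q \in S) /\ connect r2 p q) ->
  forall y, connect r1 x y -> (y \in S) /\ connect r2 x y.
Proof.
move=> xS H y /connectP [pth pP ->].
elim: pth x xS pP => [|z pth IH] x xS /=; first by split=> //; exact: connect0.
case/andP=> rxz pp.
have [zS c1] := H _ _ xS rxz.
have [yS c2] := IH z zS pp.
by split=> //; apply: connect_trans c1 c2.
Qed.


Lemma edgeP' (T : finType) (r : rel T) e : is_edge r e -> exists s t, r s t /\ e = [set s; t].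
Proof. by case/existsP=> s /existsP [t /andP [h /eqP ->]]; exists s, t. Qed.

Lemma edge_of' (T : finType) (r : rel T) s t : r s t -> is_edge r [set s; t].
Proof. by move=> h; apply/existsP; exists s; apply/existsP; exists t; rewrite h eqxx. Qed.

Lemma set2_injr (T : finType) (a b c : T) : [set a; b] = [set a; c] -> b = c.
Proof. by case/set2_inj => [[_ ->]|[-> ->]]. Qed.

Lemma line_rel_irr (T : finType) (r : rel T) X : line_rel r X X = false.
Proof. by rewrite /line_rel eqxx !andbF. Qed.

Section G.
Variables (V : finType) (adj : rel V).
Hypothesis Hsym : forall u v, adj u v = adj v u.
Hypothesis Hirr : forall u, ~~ adj u u.
Hypothesis Htri : triangle_free adj.
Hypothesis Hcub : cubic adj.

Lemma edgeP e : is_edge adj e -> exists s t, adj s t /\ e = [set s; t].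
Proof. by case/existsP=> s /existsP [t /andP [h /eqP ->]]; exists s, t. Qed.

Lemma edge_of s t : adj s t -> is_edge adj [set s; t].
Proof. by move=> h; apply/existsP; exists s; apply/existsP; exists t; rewrite h eqxx. Qed.

Lemma adj_neq s t : adj s t -> s != t.
Proof. by move=> h; apply/eqP=> st; move: h; rewrite st (negbTE (Hirr t)). Qed.

Notation LG := (LG adj).

Lemma LG_sym a b : LG a b = LG b a.
Proof.
rewrite /Defs.LG /line_rel; case: (is_edge adj a); case: (is_edge adj b) => //=.
by rewrite eq_sym setIC.
Qed.

Lemma LG_of s t w : adj s t -> adj s w -> t != w -> LG [set s; t] [set s; w].
Proof.
move=> st sw tw; rewrite /Defs.LG /line_rel !edge_of //=.
apply/andP; split.
  apply/negP=> /eqP /set2_inj [[_ /eqP]|[/eqP sw' _]]; first by rewrite (negbTE tw).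
  by move: (adj_neq sw); rewrite sw'.
by apply/set0Pn; exists s; rewrite !inE eqxx.
Qed.

Lemma LG_inv s t b : adj s t -> LG [set s; t] b ->
  exists w, (adj s w /\ w != t /\ b = [set s; w]) \/ (adj t w /\ w != s /\ b = [set t; w]).
Proof.
move=> st; rewrite /Defs.LG /line_rel => /and4P [_ eb nab /set0Pn [z]].
case: (edgeP eb) => p [q [pq E]]; subst b.
rewrite !inE => /andP [zst zpq].
have qp : adj q p by rewrite Hsym.
move: zst zpq => /orP [] /eqP -> /orP [] /eqP ez; subst.
- exists q; left; split=> //; split=> //; apply/negP=> /eqP qt; subst.
  by rewrite eqxx in nab.
- exists p; left; split=> //; split; last by rewrite set2C.
  by apply/negP=> /eqP pt; subst; rewrite set2C eqxx in nab.
- exists q; right; split=> //; split=> //; apply/negP=> /eqP qs; subst.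
  by rewrite set2C eqxx in nab.
- exists p; right; split=> //; split; last by rewrite set2C.
  by apply/negP=> /eqP ps; subst; rewrite eqxx in nab.
Qed.

Notation L2_vertex := (L2_vertex adj).
Notation L2_edge := (L2_edge adj).
Notation in_calT := (in_calT adj).
Notation clique_verts := (clique_verts adj).
Notation clique_edges := (clique_edges adj).

Lemma LG_irr a : LG a a = false.
Proof. by rewrite /Defs.LG /line_rel eqxx !andbF. Qed.

Lemma LG_neq a b : LG a b -> a != b.
Proof. by case/and4P. Qed.

Lemma LG_edge a b : LG a b -> is_edge adj a /\ is_edge adj b.
Proof. by case/and4P. Qed.

Lemma calT_inv a b c : LG a b -> LG a c -> b != c ->
  in_calT [set [set a; b]; [set a; c]] -> LG b c.
Proof.
move=> ab ac bc /existsP [a' /existsP [b' /existsP [c' /and4P [h1 h2 h3 /eqP E]]]].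
case/set2_inj: E => [[E1 E2]|[E1 E2]];
  case/set2_inj: E1 => [[? ?]|[? ?]]; case/set2_inj: E2 => [[? ?]|[? ?]]; subst;
  rewrite ?LG_irr ?eqxx // in h1 h2 h3 ab ac bc *; by rewrite LG_sym.
Qed.

Lemma calT_of a b c : LG a b -> LG a c -> LG b c ->
  in_calT [set [set a; b]; [set a; c]].
Proof.
move=> ab ac bc; apply/existsP; exists b; apply/existsP; exists a; apply/existsP; exists c.
by rewrite LG_sym ab ac bc [[set b; a]]set2C eqxx.
Qed.

Lemma L2vert_of a b : LG a b -> L2_vertex [set a; b].
Proof. by move=> h; apply: edge_of'. Qed.

Lemma L2vP x : L2_vertex x -> exists a b, LG a b /\ x = [set a; b].
Proof. by move/edgeP'. Qed.

Lemma L2_edge_of a b c : LG a b -> LG a c -> b != c -> ~~ LG b c ->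
  L2_edge [set [set a; b]; [set a; c]].
Proof.
move=> ab ac bc nbc; apply/andP; split.
  apply: edge_of'; apply/and4P; split; [exact: L2vert_of ab | exact: L2vert_of ac | |].
    by apply/negP=> /eqP /set2_injr /eqP; apply/negP.
  by apply/set0Pn; exists a; rewrite !inE eqxx.
by apply/negP=> /calT_inv -/(_ ab ac bc); apply/negP.
Qed.

Lemma cv_inv e y : y \in clique_verts e -> exists c, LG e c /\ y = [set e; c].
Proof.
rewrite inE => /andP [/L2vP [a [b [ab ->]]]]; rewrite !inE => /orP [] /eqP ->.
  by exists b.
by exists a; rewrite LG_sym set2C.
Qed.

Lemma cv_of e c : LG e c -> [set e; c] \in clique_verts e.
Proof. by move=> h; rewrite inE L2vert_of // set21. Qed.

Lemma ce_inv e x y : [set x; y] \in clique_edges e ->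
  exists b c, [/\ LG e b, LG e c, b != c & ~~ LG b c] /\ (x = [set e; b] /\ y = [set e; c]).
Proof.
rewrite inE => /andP [E sub].
have xv : x \in clique_verts e by apply: (subsetP sub); rewrite set21.
have yv : y \in clique_verts e by apply: (subsetP sub); rewrite set22.
case: (cv_inv xv) => b [eb xb]; case: (cv_inv yv) => c [ec yc].
have bc : b != c.
  apply/negP=> /eqP bc; subst c; move: E => /andP [/edgeP' [x' [y' [h E]]] _].
  by case/set2_inj: E => [[E1 E2]|[E1 E2]]; rewrite -E1 -E2 xb yc /LLG line_rel_irr in h.
exists b, c; split=> //; split=> //; apply/negP=> bc'.
by move: E => /andP [_ /negP]; apply; rewrite xb yc; apply: calT_of.
Qed.

Lemma ce_of e b c : LG e b -> LG e c -> b != c -> ~~ LG b c ->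
  [set [set e; b]; [set e; c]] \in clique_edges e.
Proof.
move=> eb ec bc nbc; rewrite inE L2_edge_of //=.
by apply/subsetP=> z; rewrite in_set2 => /orP [] /eqP ->; [apply: cv_of eb | apply: cv_of ec].
Qed.

Lemma ce_sub e E : E \in clique_edges e -> E \subset clique_verts e.
Proof. by rewrite inE => /andP []. Qed.

Lemma ce_L2 e E : E \in clique_edges e -> L2_edge E.
Proof. by rewrite inE => /andP []. Qed.


Definition nbr s t := [set z | adj s z & z != t].
Definition side (e : {set V}) s t := [set [set e; [set s; z]] | z in nbr s t].

Lemma nbr_card s t : adj s t -> #|nbr s t| = 2.
Proof.
move=> st.
have -> : nbr s t = [set z | adj s z] :\ t.
  by apply/setP=> z; rewrite !inE andbC.
have := cardsD1 t [set z | adj s z]; rewrite Hcub inE st add1n.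
by case.
Qed.

Lemma side_card e s t : adj s t -> #|side e s t| = 2.
Proof.
move=> st; rewrite card_imset ?nbr_card //.
by move=> z z' /set2_injr /set2_injr.
Qed.

Lemma LG_cross s t w w' : adj s t -> adj s w -> w != t -> adj t w' -> w' != s ->
  ~~ LG [set s; w] [set t; w'] && ([set s; w] != [set t; w']).
Proof.
move=> st sw wt tw' w's; apply/andP; split.
  apply/negP=> /and4P [_ _ _ /set0Pn [z]]; rewrite !inE => /andP [].
  case/orP=> /eqP -> /orP [] /eqP E.
  - by move: (adj_neq st); rewrite E eqxx.
  - by move: w's; rewrite E eqxx.
  - by move: wt; rewrite E eqxx.
  - by subst w'; move: (Htri s t w); rewrite st sw tw'.
apply/negP=> /eqP E; have : s \in [set t; w'] by rewrite -E set21.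
rewrite !inE => /orP [] /eqP E'.
  by move: (adj_neq st); rewrite E' eqxx.
by move: w's; rewrite E' eqxx.
Qed.

Lemma side_LG e s t z : e = [set s; t] -> adj s t -> z \in nbr s t -> LG e [set s; z].
Proof.
by move=> -> st; rewrite inE => /andP [sz zt]; apply: LG_of; rewrite // eq_sym.
Qed.

Lemma side_cv e s t : e = [set s; t] -> adj s t -> side e s t \subset clique_verts e.
Proof.
move=> He st; apply/subsetP=> y /imsetP [z zn ->].
by apply: cv_of; apply: side_LG zn.
Qed.

Lemma cv_side e s t y : e = [set s; t] -> adj s t -> y \in clique_verts e ->
  y \in side e s t :|: side e t s.
Proof.
move=> He st /cv_inv [c [ec ->]].
move: ec; rewrite {1}He => /(LG_inv st) [w [[sw [wt ->]]|[tw [ws ->]]]].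
  by rewrite inE; apply/orP; left; apply/imsetP; exists w; rewrite // inE sw wt.
by rewrite inE; apply/orP; right; apply/imsetP; exists w; rewrite // inE tw ws.
Qed.

Lemma side_ce e s t x y : e = [set s; t] -> adj s t -> x \in side e s t ->
  ([set x; y] \in clique_edges e) = (y \in side e t s).
Proof.
move=> He st /imsetP [w wn ->].
have ts : adj t s by rewrite Hsym.
have He' : e = [set t; s] by rewrite He set2C.
move: (wn); rewrite inE => /andP [sw wt].
apply/idP/idP.
  case/ce_inv=> b [c [[eb ec bc nbc] [/set2_injr xb ->]]].
  subst b.
  move: ec; rewrite {1}He => /(LG_inv st) [w'' [[sw'' [w''t E]]|[tw'' [w''s E]]]].
    subst c; case: (eqVneq w w'') => [E|ww''].
      by subst w''; rewrite eqxx in bc.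
    by move: nbc; rewrite LG_of.
  by subst c; apply/imsetP; exists w''; rewrite // inE tw'' w''s.
case/imsetP=> w' wn' ->.
move: (wn'); rewrite inE => /andP [tw' w's].
case/andP: (LG_cross st sw wt tw' w's) => nbc bc.
by apply: ce_of => //; [apply: side_LG wn | apply: side_LG wn'].
Qed.


Notation orel L := (open_rel adj L).

Lemma line_rel_sym (T : finType) (r : rel T) : symmetric r -> symmetric (line_rel r).
Proof.
move=> rs x y; rewrite /line_rel; case: (is_edge r x); case: (is_edge r y) => //=.
by rewrite eq_sym setIC.
Qed.

Lemma LLG_sym : symmetric (LLG adj).
Proof. by apply: line_rel_sym => x y; exact: LG_sym. Qed.

Lemma L2_edgeP E : L2_edge E -> exists x y, LLG adj x y /\ E = [set x; y].
Proof. by case/andP => /edgeP'. Qed.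

Lemma ce_form e E : E \in clique_edges e -> exists x y, E = [set x; y].
Proof. by move/ce_L2/L2_edgeP => [x [y [_ ->]]]; exists x, y. Qed.

Lemma ce_form_at e E x : E \in clique_edges e -> x \in E -> exists y, E = [set x; y].
Proof.
move=> h; case: (ce_form h) => p [q ->]; rewrite in_set2 => /orP [] /eqP ->.
  by exists q.
by exists p; rewrite set2C.
Qed.

Lemma clique_disj e1 e2 E : E \in clique_edges e1 -> E \in clique_edges e2 -> e1 = e2.
Proof.
move=> h1 h2; case: (ce_form h1) => x [y E']; subst E.
case: (ce_inv h1) => b [c [[_ _ bc _] [xb yc]]].
case: (ce_inv h2) => b' [c' [[_ _ _ _] [xb' yc']]].
case: (eqVneq e1 e2) => // ne.
move: xb'; rewrite xb => /set2_inj [[E1 _]|[_ E1]]; first by rewrite E1 eqxx in ne.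
move: yc'; rewrite yc => /set2_inj [[E2 _]|[_ E2]]; first by rewrite E2 eqxx in ne.
by rewrite E1 E2 eqxx in bc.
Qed.

Lemma valid_flip L e : valid adj L -> valid adj (flip adj e L).
Proof.
move=> vL e' he' x xv; case: (vL e' he' x xv) => f1 [f2 [h1 h2 x1 x2 d]].
exists f1, f2; split=> //; rewrite /flip.
case: (eqVneq e e') => [E|ne]; first by subst e'; rewrite h1 h2 (inj_eq negb_inj).
have n1 : f1 \notin clique_edges e.
  by apply/negP=> h; move: ne; rewrite (clique_disj h h1) eqxx.
have n2 : f2 \notin clique_edges e.
  by apply/negP=> h; move: ne; rewrite (clique_disj h h2) eqxx.
by rewrite (negbTE n1) (negbTE n2).
Qed.

Lemma partners L e s t x : valid adj L -> e = [set s; t] -> adj s t -> x \in side e s t ->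
  exists y1 y2, [/\ side e t s = [set y1; y2], y1 != y2, L [set x; y1] & ~~ L [set x; y2]].
Proof.
move=> vL He st xs.
have ts : adj t s by rewrite Hsym.
have He' : e = [set t; s] by rewrite He set2C.
have xv : x \in clique_verts e by apply: (subsetP (side_cv He st)).
have he : is_edge adj e by rewrite He; apply: edge_of'.
case: (vL e he x xv) => f1 [f2 [h1 h2 x1 x2 d]].
case: (ce_form_at h1 x1) => y1 E1; case: (ce_form_at h2 x2) => y2 E2; subst f1 f2.
have y1s : y1 \in side e t s by rewrite -(side_ce _ He st xs).
have y2s : y2 \in side e t s by rewrite -(side_ce _ He st xs).
have y12 : y1 != y2 by apply/negP => /eqP E; move: d; rewrite E eqxx.
have S : side e t s = [set y1; y2].
  apply/eqP; rewrite eq_sym eqEcard side_card // cards2 y12 andbT.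
  by apply/subsetP=> z; rewrite in_set2 => /orP [] /eqP ->.
case L1: (L [set x; y1]).
  exists y1, y2; split=> //; by move: d; rewrite L1; case: (L _).
exists y2, y1; split=> //; first by rewrite S set2C.
  by rewrite eq_sym.
  by move: d; rewrite L1; case: (L _).
by rewrite L1.
Qed.

Definition P L e x := [set y | ([set x; y] \in clique_edges e) && L [set x; y]].

Lemma P_side L e s t x : valid adj L -> e = [set s; t] -> adj s t -> x \in side e s t ->
  exists y1, P L e x = [set y1].
Proof.
move=> vL He st xs; case: (partners vL He st xs) => y1 [y2 [S y12 l1 l2]].
exists y1; apply/setP=> y; rewrite in_set in_set1 (side_ce _ He st xs) S in_set2.
case: (eqVneq y y1) => [->|ne]; first by rewrite l1.
by case: (eqVneq y y2) => [->|ne2] /=; rewrite ?(negbTE l2).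
Qed.

Lemma P_card L e x : valid adj L -> is_edge adj e -> x \in clique_verts e -> #|P L e x| = 1.
Proof.
move=> vL /edgeP' [s [t [st He]]] xv.
have ts : adj t s by rewrite Hsym.
have He' : e = [set t; s] by rewrite He set2C.
case/setUP: (cv_side He st xv) => xs.
  by case: (P_side vL He st xs) => y1 ->; rewrite cards1.
by case: (P_side vL He' ts xs) => y1 ->; rewrite cards1.
Qed.

Lemma orel_sym L : symmetric (orel L).
Proof. by move=> x y; rewrite /open_rel set2C. Qed.

Lemma orel_LLG L x y : orel L x y -> LLG adj x y.
Proof.
case/andP=> /L2_edgeP [x' [y' [h E]]] _.
by case/set2_inj: E => [[-> ->]|[-> ->]] //; rewrite LLG_sym.
Qed.

Lemma orel_L2v L x y : orel L x y -> L2_vertex x /\ L2_vertex y.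
Proof. by move/orel_LLG => /and4P []. Qed.

Lemma L2v_edge x e : L2_vertex x -> e \in x -> is_edge adj e.
Proof.
case/L2vP=> a [b [ab ->]]; rewrite in_set2 => /orP [] /eqP ->; by case: (LG_edge ab).
Qed.

Lemma orel_ce L x y : orel L x y -> exists e, is_edge adj e /\ [set x; y] \in clique_edges e.
Proof.
move=> h; have := orel_LLG h; case/and4P => vx vy _ /set0Pn [e]; rewrite inE => /andP [ex ey].
exists e; split; first by apply: L2v_edge vx ex.
rewrite inE; case/andP: h => -> _ /=.
by apply/subsetP => z; rewrite in_set2 => /orP [] /eqP ->; rewrite inE; apply/andP; split.
Qed.

Lemma ce_orel L e x y : [set x; y] \in clique_edges e -> orel L x y = L [set x; y].
Proof. by move=> h; rewrite /open_rel (ce_L2 h). Qed.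

Lemma P_mem L e x y : (y \in P L e x) = ([set x; y] \in clique_edges e) && L [set x; y].
Proof. by rewrite /P in_set. Qed.

Lemma orel_mem L x y : (y \in [set y | orel L x y]) = orel L x y.
Proof. by rewrite in_set. Qed.

Lemma orel_split L x a b : LG a b -> x = [set a; b] ->
  [set y | orel L x y] = P L a x :|: P L b x.
Proof.
move=> ab xE; apply/setP => y; rewrite in_setU !P_mem orel_mem.
apply/idP/idP.
  move=> h; case: (orel_ce h) => e [he ce].
  have : x \in clique_verts e by apply: (subsetP (ce_sub ce)); rewrite set21.
  rewrite inE => /andP [_]; rewrite {1}xE in_set2 => /orP [] /eqP E; subst e.
    by rewrite ce (ce_orel L ce) in h *; rewrite h.
  by rewrite ce (ce_orel L ce) in h *; rewrite h orbT.
by case/orP => /andP [ce l]; rewrite (ce_orel L ce).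
Qed.

Lemma deg2 L x : valid adj L -> L2_vertex x -> #|[set y | orel L x y]| = 2.
Proof.
move=> vL /L2vP [a [b [ab xE]]].
rewrite (orel_split L ab xE) cardsU.
have -> : P L a x :&: P L b x = set0.
  apply/setP=> y; rewrite inE in_set0 !P_mem.
  apply/negP => /andP [/andP [c1 _] /andP [c2 _]].
  by move: (LG_neq ab); rewrite (clique_disj c1 c2) eqxx.
case: (LG_edge ab) => ea eb.
rewrite cards0 subn0 !(P_card vL) //; rewrite xE; first by rewrite set2C; apply: cv_of; rewrite LG_sym.
exact: cv_of.
Qed.

Definition R1 L e : rel {set {set V}} := fun x y => orel L x y && ([set x; y] \notin clique_edges e).
Arguments R1 : simpl never.

Lemma R1_sym L e : symmetric (R1 L e).
Proof. by move=> x y; rewrite /R1 orel_sym set2C. Qed.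

Lemma orel_irr L : irreflexive (orel L).
Proof. by move=> x; apply/negP => /orel_LLG; rewrite /LLG line_rel_irr. Qed.

Lemma R1_deg L e x : valid adj L -> is_edge adj e -> x \in clique_verts e ->
  #|[set y | R1 L e x y]| = 1.
Proof.
move=> vL he xv; case: (cv_inv xv) => b [eb xE].
have -> : [set y | R1 L e x y] = P L b x.
  apply/setP=> y; rewrite P_mem in_set /R1; apply/idP/idP.
    case/andP=> h nce; move: (h); rewrite -orel_mem.
    rewrite (orel_split L eb xE) in_setU !P_mem => /orP [] //.
    by case/andP => ce _; rewrite ce in nce.
  case/andP=> ce l; rewrite (ce_orel L ce) l /=.
  apply/negP=> ce'; move: (LG_neq eb); rewrite (clique_disj ce ce') eqxx //.
apply: P_card => //; first by case: (LG_edge eb).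
by rewrite xE set2C; apply: cv_of; rewrite LG_sym.
Qed.

Lemma R1_out L e x y : x \notin clique_verts e -> R1 L e x y = orel L x y.
Proof.
move=> nx; rewrite /R1; case: (orel L x y) => //=; apply/negP=> ce.
by move: nx; rewrite (subsetP (ce_sub ce)) // set21.
Qed.

Lemma connect_L2v L x y : L2_vertex x -> connect (orel L) x y -> L2_vertex y.
Proof.
move=> vx c.
have := closure_connect (S := [set z | L2_vertex z]) (r2 := orel L) _ _ c.
rewrite inE vx; case=> //; last by rewrite inE.
by move=> p q _ h; rewrite inE; case: (orel_L2v h) => _ ->; split=> //; apply: connect1.
Qed.

Lemma R1_orel L e : subrel (connect (R1 L e)) (connect (orel L)).
Proof. by apply: connect_sub => x y /andP [h _]; apply: connect1. Qed.

Lemma bridge L e p p' : valid adj L -> is_edge adj e -> p \in clique_verts e ->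
  [set p; p'] \in clique_edges e -> L [set p; p'] ->
  (forall q, q \in clique_verts e -> q != p -> q != p' -> ~~ connect (orel L) p q) ->
  connect (R1 L e) p p'.
Proof.
move=> vL he pv ce lp hq; apply/negPn/negP => np'.
pose C := [set y | connect (R1 L e) p y].
have pL2 : L2_vertex p by move: pv; rewrite inE => /andP [].
have Ccl : forall y z, y \in C -> (R1 L e y z) -> z \in C.
  move=> y z; rewrite /C !in_set => c r; apply: (connect_trans c); apply: connect1; exact: r.
have Cout : forall y, y \in C -> y != p -> y \notin clique_verts e.
  move=> y yC yp; apply/negP => yv.
  have yp' : y != p' by apply/negP => /eqP E; subst y; rewrite /C inE in yC; rewrite yC in np'.
  by move: (hq y yv yp yp'); rewrite /C inE in yC; rewrite (R1_orel yC).
have CL2 : forall y, y \in C -> L2_vertex y.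
  by move=> y; rewrite /C inE => /R1_orel; apply: connect_L2v.
have deg : forall y, y \in C -> #|[set z in C | R1 L e y z]| = if y == p then 1 else 2.
  move=> y yC.
  have -> : [set z in C | R1 L e y z] = [set z | R1 L e y z].
    apply/setP => z; rewrite !inE; apply/andP/idP => [[]|h] //; split=> //.
    by move: (Ccl y z yC h); rewrite /C inE.
  case: (eqVneq y p) => [->|yp]; first by apply: R1_deg.
  have -> : [set z | R1 L e y z] = [set z | orel L y z].
    by apply/setP => z; rewrite !in_set R1_out ?Cout.
  by apply: deg2 => //; apply: CL2.
have irr : irreflexive (R1 L e) by move=> x; rewrite /R1 orel_irr.
have H := handshake C (R1_sym L e) irr.
have E : \sum_(y in C) #|[set z in C | R1 L e y z]| = \sum_(y in C) (if y == p then 1 else 2).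
  by apply: eq_bigr => y yC; apply: deg.
have pC : p \in C by rewrite /C inE connect0.
rewrite E (bigD1 p) //= eqxx in H.
have ev : ~~ odd (\sum_(y in C | y != p) (if y == p then 1 else 2)).
  elim/big_ind: _ => //.
    by move=> a b; rewrite oddD => /negbTE -> /negbTE ->.
  by move=> y /andP [_ /negbTE ->].
by move: H; rewrite oddD (negbTE ev).
Qed.

Lemma card2_at (T : finType) (A : {set T}) x : #|A| = 2 -> x \in A ->
  exists r, r != x /\ A = [set x; r].
Proof.
move=> /eqP /cards2P [a [b [ab ->]]]; rewrite in_set2 => /orP [] /eqP ->.
  by exists b; rewrite eq_sym.
by exists a; rewrite set2C.
Qed.

Lemma uniq_partner L e s t x y y' : valid adj L -> e = [set s; t] -> adj s t ->
  x \in side e s t -> y \in side e t s -> y' \in side e t s ->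
  L [set x; y] -> L [set x; y'] -> y = y'.
Proof.
move=> vL He st xs ys ys' l l'.
case: (partners vL He st xs) => y1 [y2 [S _ l1 l2]].
move: ys ys'; rewrite S !in_set2 => /orP [] /eqP E /orP [] /eqP E'; subst => //.
- by rewrite l' in l2.
- by rewrite l in l2.
Qed.

Lemma connect_orel_sym L : connect_sym (orel L).
Proof. by apply: sym_connect_sym; apply: orel_sym. Qed.

Lemma R1_flip L e : subrel (connect (R1 L e)) (connect (orel (flip adj e L))).
Proof.
apply: connect_sub => x y /andP [/andP [h1 h2] h3]; apply: connect1.
by rewrite /open_rel /flip h1 (negbTE h3).
Qed.

Lemma merge_side L e s t z1 z2 : valid adj L -> e = [set s; t] -> adj s t ->
  z1 \in side e s t -> z2 \in clique_verts e -> ~~ connect (orel L) z1 z2 ->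
  forall y, connect (orel L) z1 y || connect (orel L) z2 y ->
  connect (orel (flip adj e L)) z1 y.
Proof.
move=> vL He st z1s z2v nc.
have ts : adj t s by rewrite Hsym.
have He' : e = [set t; s] by rewrite He set2C.
have he : is_edge adj e by rewrite He; apply: edge_of'.
have csym := connect_orel_sym L.
case: (partners vL He st z1s) => q1 [w [St q1w l1 l2]].
have q1s : q1 \in side e t s by rewrite St set21.
have ws : w \in side e t s by rewrite St set22.
case: (card2_at (side_card e st) z1s) => r [rz1 Ss].
have rs : r \in side e s t by rewrite Ss set22.
case: (partners vL He st rs) => u1 [u2 [Su _ lu1 _]].
have u1s : u1 \in side e t s by rewrite Su set21.
have u1w : u1 = w.
  move: u1s; rewrite St in_set2 => /orP [] /eqP // E; subst u1.
  have := uniq_partner vL He' ts q1s z1s rs; rewrite set2C l1 set2C lu1 => /(_ isT isT) E.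
  by rewrite E eqxx in rz1.
subst u1.
have ce1 : [set z1; q1] \in clique_edges e by rewrite (side_ce _ He st z1s).
have cew : [set z1; w] \in clique_edges e by rewrite (side_ce _ He st z1s).
have cer : [set r; w] \in clique_edges e by rewrite (side_ce _ He st rs).
have o1 : orel L z1 q1 by rewrite (ce_orel L ce1).
have orw : orel L r w by rewrite (ce_orel L cer).
have Xe : forall q, q \in clique_verts e -> [|| q == z1, q == r, q == q1 | q == w].
  move=> q qv; move: (cv_side He st qv); rewrite in_setU Ss St !in_set2.
  by case/orP => /orP [] ->; rewrite ?orbT.
have cz2w : connect (orel L) w z2.
  have := Xe z2 z2v; case/or4P => /eqP E; subst z2.
  - by rewrite connect0 in nc.
  - by rewrite csym; apply: connect1.
  - by rewrite connect1 in nc.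
  - exact: connect0.
have nz1w : ~~ connect (orel L) z1 w.
  by apply: contra nc => c; apply: connect_trans c cz2w.
have nz1r : ~~ connect (orel L) z1 r.
  by apply: contra nz1w => c; apply: (connect_trans c); apply: connect1.
have nwq1 : ~~ connect (orel L) w q1.
  apply: contra nz1w => c; have c2 : connect (orel L) z1 q1 by apply: connect1.
  by apply: (connect_trans c2); rewrite csym.
have nwz1 : ~~ connect (orel L) w z1 by rewrite csym.
have z1v : z1 \in clique_verts e by apply: (subsetP (side_cv He st)).
have wv : w \in clique_verts e by apply: (subsetP (side_cv He' ts)).
have B1 : connect (R1 L e) z1 q1.
  apply: bridge => // q qv qz1 qq1; have := Xe q qv.
  by rewrite (negbTE qz1) (negbTE qq1) /= => /orP [] /eqP ->.
have B2 : connect (R1 L e) w r.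
  apply: bridge => //; first by rewrite set2C.
    by rewrite set2C; case/andP: orw.
  move=> q qv qw qr; have := Xe q qv.
  by rewrite (negbTE qw) (negbTE qr) /= orbF => /orP [] /eqP ->; rewrite // csym.
pose L' := flip adj e L.
have csym' := connect_orel_sym L'.
have oz1w : orel L' z1 w by rewrite /open_rel /L' /flip cew (ce_L2 cew) l2.
have inz1 : forall p, p \in clique_verts e -> connect (orel L) z1 p -> p = z1 \/ p = q1.
  move=> p pv cp; have := Xe p pv; case/or4P => /eqP E; subst p; auto.
  - by rewrite cp in nz1r.
  - by rewrite cp in nz1w.
have inw : forall p, p \in clique_verts e -> connect (orel L) w p -> p = w \/ p = r.
  move=> p pv cp; have := Xe p pv; case/or4P => /eqP E; subst p; auto.
  - by rewrite cp in nwz1.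
  - by rewrite cp in nwq1.
have gen : forall x0 a b, (forall p, p \in clique_verts e -> connect (orel L) x0 p -> p = a \/ p = b) ->
    connect (R1 L e) a b -> x0 = a ->
    forall y, connect (orel L) x0 y -> connect (orel L') x0 y.
  move=> x0 a b hab Bab E y c; subst x0.
  suff hS : forall p q, p \in [set v | connect (orel L) a v] -> orel L p q ->
      (q \in [set v | connect (orel L) a v]) /\ connect (orel L') p q.
    by case: (closure_connect (S := [set v | connect (orel L) a v]) (r2 := orel L') (x := a) _ hS c);
      rewrite // inE connect0.
  move=> p q; rewrite inE => cp opq; split.
    by rewrite inE; apply: (connect_trans cp); apply: connect1.
  case ceq: ([set p; q] \in clique_edges e); last first.
    by apply: connect1; move: opq; rewrite /open_rel /L' /flip ceq.
  have pv : p \in clique_verts e by apply: (subsetP (ce_sub ceq)); rewrite set21.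
  have qv : q \in clique_verts e by apply: (subsetP (ce_sub ceq)); rewrite set22.
  have cq : connect (orel L) a q by apply: (connect_trans cp); apply: connect1.
  have pq : p != q by apply/negP => /eqP E; subst q; rewrite orel_irr in opq.
  have Bab' : connect (orel L') a b by apply: R1_flip.
  case: (hab p pv cp) => ->; case: (hab q qv cq) => E; subst q => //;
    try by rewrite eqxx in pq.
  by rewrite csym'.
have H1 := gen z1 z1 q1 inz1 B1 erefl.
have H2 := gen w w r inw B2 erefl.
move=> y /orP [c|c]; first exact: H1.
have cwy : connect (orel L) w y by apply: connect_trans cz2w c.
have c1 : connect (orel L') z1 w by apply: connect1.
exact: connect_trans c1 (H2 y cwy).
Qed.

Lemma merge L e z1 z2 : valid adj L -> is_edge adj e ->
  z1 \in clique_verts e -> z2 \in clique_verts e -> ~~ connect (orel L) z1 z2 ->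
  forall y, connect (orel L) z1 y || connect (orel L) z2 y ->
  connect (orel (flip adj e L)) z1 y.
Proof.
move=> vL /edgeP' [s [t [st He]]] z1v z2v nc.
have ts : adj t s by rewrite Hsym.
have He' : e = [set t; s] by rewrite He set2C.
case/setUP: (cv_side He st z1v) => z1s.
  exact: (merge_side vL He st z1s).
exact: (merge_side vL He' ts z1s).
Qed.

Definition compg L x : subgraph V :=
  ([set y | connect (orel L) x y],
   [set E | [&& L2_edge E, L E & E \subset [set y | connect (orel L) x y]]]).

Lemma inG_comp L g : in_Gamma adj L g -> exists x, L2_vertex x /\ g = compg L x.
Proof. by case: g => g1 g2 [x [vx /= -> ->]]; exists x. Qed.

Lemma comp_inG L x : L2_vertex x -> in_Gamma adj L (compg L x).
Proof. by move=> vx; exists x; split. Qed.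

Lemma comp_eq L x y : connect (orel L) x y -> compg L x = compg L y.
Proof.
move=> c.
have E : [set v | connect (orel L) x v] = [set v | connect (orel L) y v].
  apply/setP => v; rewrite !inE; apply/idP/idP => h.
    by apply: connect_trans h; rewrite connect_orel_sym.
  exact: connect_trans c h.
by rewrite /compg E.
Qed.

Lemma inG_mem L g z : in_Gamma adj L g -> z \in g.1 -> g = compg L z.
Proof.
case/inG_comp => x [vx ->]; rewrite inE => c.
exact: comp_eq.
Qed.

Lemma inG_L2v L g z : in_Gamma adj L g -> z \in g.1 -> L2_vertex z.
Proof. by case/inG_comp => x [vx ->]; rewrite inE; apply: connect_L2v. Qed.

Lemma L2_edge_nonempty E : L2_edge E -> exists x, x \in E.
Proof. by case/L2_edgeP => x [y [_ ->]]; exists x; rewrite set21. Qed.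

Lemma comp2_sub L x E : E \in (compg L x).2 -> E \subset (compg L x).1.
Proof. by rewrite inE => /and3P []. Qed.

Lemma pres L e g : in_Gamma adj L g -> (forall y, y \in g.1 -> y \notin clique_verts e) ->
  in_Gamma adj (flip adj e L) g.
Proof.
case/inG_comp => x [vx ->] /= hout.
set L' := flip adj e L.
set S := [set y | connect (orel L) x y].
have eqo : forall p q, p \in S -> orel L p q = orel L' p q.
  move=> p q pS; rewrite /open_rel /L' /flip.
  case ce: ([set p; q] \in clique_edges e) => //.
  by move: (hout p pS); rewrite (subsetP (ce_sub ce)) // set21.
have xS : x \in S by rewrite inE connect0.
have ES : S = [set y | connect (orel L') x y].
  apply/setP => y; rewrite [y \in S]inE [RHS]inE; apply/idP/idP => c.
    case: (closure_connect (S := S) (r2 := orel L') xS _ c) => // p q pS opq.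
    split; first by rewrite inE; apply: (connect_trans (_ : connect _ x p)); [rewrite -inE | apply: connect1].
    by apply: connect1; rewrite -eqo.
  case: (closure_connect (S := S) (r2 := orel L) xS _ c) => // p q pS opq.
  rewrite -eqo // in opq.
  split; first by rewrite inE; apply: (connect_trans (_ : connect _ x p)); [rewrite -inE | apply: connect1].
  exact: connect1.
suff -> : compg L x = compg L' x by apply: comp_inG.
rewrite /compg -/S -ES; congr pair.
apply/setP => E; rewrite !in_set; case h: (L2_edge E) => //=.
case s: (E \subset S); rewrite ?andbF ?andbT //.
case: (L2_edge_nonempty h) => p pE.
rewrite /L' /flip; case ce: (E \in clique_edges e) => //.
by move: (hout p (subsetP s p pE)); rewrite (subsetP (ce_sub ce)).
Qed.

Lemma cyc_adj_sym g h : cyc_adjacent adj g h -> cyc_adjacent adj h g.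
Proof. by case=> e [he [f1 a1 b1] [f2 a2 b2]]; exists e; split=> //; [exists f2 | exists f1]. Qed.

Lemma adj_transfer L e g c c' : in_Gamma adj L g -> in_Gamma adj L c ->
  in_Gamma adj (flip adj e L) c' -> c.1 \subset c'.1 ->
  (forall y, y \in g.1 -> y \notin clique_verts e) ->
  cyc_adjacent adj g c -> cyc_adjacent adj g c'.
Proof.
move=> gG cG c'G sub hout [e'' [he'' [f1 f1g f1c] [f2 f2c f2e]]].
exists e''; split=> //; first by exists f1.
exists f2 => //.
case: (inG_comp gG) => x [vx gE]; rewrite gE in f1g hout.
case: (inG_comp cG) => y [vy cE]; rewrite cE in f2c sub.
case: (inG_comp c'G) => z [vz c'E]; rewrite c'E in sub *.
have ne : e'' != e.
  apply/negP => /eqP E; subst e''.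
  case: (L2_edge_nonempty (ce_L2 f1c)) => p pf.
  by move: (hout p (subsetP (comp2_sub f1g) p pf)); rewrite (subsetP (ce_sub f1c)).
have nce : f2 \notin clique_edges e.
  by apply/negP => h; move: ne; rewrite (clique_disj f2e h) eqxx.
move: f2c; rewrite !in_set => /and3P [h1 h2 h3].
rewrite h1 /flip (negbTE nce) h2 /=.
exact: subset_trans h3 sub.
Qed.

Lemma open_at L g z e : valid adj L -> in_Gamma adj L g -> z \in g.1 -> is_edge adj e ->
  z \in clique_verts e -> exists2 f, f \in g.2 & f \in clique_edges e.
Proof.
move=> vL gG zg he zv.
have := inG_mem gG zg => gE; rewrite gE.
case: (vL e he z zv) => f1 [f2 [h1 h2 x1 x2 d]].
have [f [hf xf lf]] : exists f, [/\ f \in clique_edges e, z \in f & L f].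
  by case l1: (L f1); [exists f1 | exists f2; split=> //; move: d; rewrite l1; case: (L f2)].
exists f => //.
case: (ce_form_at hf xf) => y fE; subst f.
rewrite in_set (ce_L2 hf) lf /=.
apply/subsetP => v; rewrite in_set2 => /orP [] /eqP ->; rewrite inE ?connect0 //.
by apply: connect1; rewrite (ce_orel L hf).
Qed.

Lemma adj_shared L g h e z z' : valid adj L -> in_Gamma adj L g -> in_Gamma adj L h ->
  is_edge adj e -> z \in g.1 -> z \in clique_verts e -> z' \in h.1 -> z' \in clique_verts e ->
  cyc_adjacent adj g h.
Proof.
move=> vL gG hG he zg zv z'h z'v; exists e; split=> //.
  exact: open_at vL gG zg he zv.
exact: open_at vL hG z'h he z'v.
Qed.

Fixpoint chain L (a : subgraph V) (cs : seq (subgraph V)) (b : subgraph V) : Prop :=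
  match cs with
  | [::] => cyc_adjacent adj a b
  | c :: cs' => [/\ in_Gamma adj L c, cyc_adjacent adj a c & chain L c cs' b]
  end.

Lemma chain_rcons L a cs c b : chain L a cs c -> in_Gamma adj L c -> cyc_adjacent adj c b ->
  chain L a (rcons cs c) b.
Proof.
elim: cs a => [|d cs IH] a /=; first by move=> h1 h2 h3; split.
by case=> h1 h2 h3 h4 h5; split=> //; apply: IH.
Qed.

Lemma chain_suffix L a cs1 c cs2 b : chain L a (cs1 ++ c :: cs2) b ->
  in_Gamma adj L c /\ chain L c cs2 b.
Proof.
elim: cs1 a => [|d cs IH] a /=; first by case.
by case=> _ _; apply: IH.
Qed.

Lemma chain_flip L L' a cs b : chain L a cs b ->
  (forall c, c \in cs -> in_Gamma adj L c -> in_Gamma adj L' c) -> chain L' a cs b.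
Proof.
elim: cs a => [|d cs IH] a //= [h1 h2 h3] H; split=> //.
  by apply: H; rewrite ?inE ?eqxx.
by apply: IH => // c cc; apply: H; rewrite inE cc orbT.
Qed.

Definition Kr := [rel x y | [exists e, [&& is_edge adj e, x \in clique_verts e & y \in clique_verts e]]].

Lemma share_LG a c s : is_edge adj a -> is_edge adj c -> s \in a -> s \in c -> connect LG a c.
Proof.
move=> ea ec sa sc; case: (eqVneq a c) => [->|ne]; first exact: connect0.
apply: connect1; apply/and4P; split=> //.
by apply/set0Pn; exists s; rewrite inE sa sc.
Qed.

Hypothesis Hconn : connected_graph adj.

Lemma LG_conn a c : is_edge adj a -> is_edge adj c -> connect LG a c.
Proof.
move=> ea ec; case: (edgeP' ea) => s [t [st aE]]; case: (edgeP' ec) => u [v [uv cE]].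
have : connect adj s u := Hconn s u.
have sa : s \in a by rewrite aE set21.
have uc : u \in c by rewrite cE set21.
move=> /connectP [p pp lp] {aE st}.
elim: p s a ea sa pp lp => [|s1 p IH] s a ea sa /=; first by move=> _ E; subst u; apply: share_LG sa uc.
case/andP => ss1 pp lp.
have eb : is_edge adj [set s; s1] by apply: edge_of'.
apply: (connect_trans (share_LG ea eb sa (set21 _ _))).
by apply: (IH s1) => //; rewrite set22.
Qed.

Lemma Kr_conn x y : L2_vertex x -> L2_vertex y -> connect Kr x y.
Proof.
move=> vx vy; case: (L2vP vx) => a [b [ab xE]]; case: (L2vP vy) => c [d [cd yE]].
have ea : is_edge adj a by case: (LG_edge ab).
have ec : is_edge adj c by case: (LG_edge cd).
have ax : a \in x by rewrite xE set21.
have cy : c \in y by rewrite yE set21.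
have : connect LG a c by apply: LG_conn.
move=> /connectP [p pp lp].
elim: p a x ea vx ax pp lp {ab xE} => [|a1 p IH] a x ea vx ax /=.
  move=> _ E; subst c; apply: connect1; apply/existsP; exists a.
  by rewrite ea !inE vx ax vy cy.
case/andP => aa1 pp lp.
have v' : L2_vertex [set a; a1] by apply: L2vert_of.
apply: (connect_trans (y := [set a; a1])).
  apply: connect1; apply/existsP; exists a; rewrite ea !inE vx ax /=.
  by rewrite v' eqxx.
apply: (IH a1 [set a; a1]) => //; last by rewrite set22.
by case: (LG_edge aa1).
Qed.

Lemma chain_exists L g1 g2 : valid adj L -> in_Gamma adj L g1 -> in_Gamma adj L g2 ->
  exists cs, chain L g1 cs g2.
Proof.
move=> vL g1G g2G.
case: (inG_comp g1G) => x0 [v0 g1E]; case: (inG_comp g2G) => y0 [w0 ->].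
have : connect Kr x0 y0 by apply: Kr_conn.
move=> /connectP [p pp ->].
have mem0 : forall x, x \in (compg L x).1 by move=> x; rewrite inE connect0.
have base : exists cs, chain L g1 cs (compg L x0).
  exists [::]; rewrite /= g1E.
  case: (L2vP v0) => a [b [ab xE]].
  have ea : is_edge adj a by case: (LG_edge ab).
  have xv : x0 \in clique_verts a by rewrite xE; apply: cv_of.
  by apply: (adj_shared vL (comp_inG L v0) (comp_inG L v0) ea (mem0 x0) xv (mem0 x0) xv).
elim: p x0 v0 {g1E} base pp => [|x1 p IH] x v0 base //=.
case/andP => /existsP [e /and3P [he xv x1v]] pp.
have v1 : L2_vertex x1 by move: x1v; rewrite inE => /andP [].
apply: IH => //.
case: base => cs ch; exists (rcons cs (compg L x)).
apply: chain_rcons => //; first exact: comp_inG.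
exact: (adj_shared vL (comp_inG L v0) (comp_inG L v1) he (mem0 x) xv (mem0 x1) x1v).
Qed.

Definition GOAL L g1 g2 : Prop :=
  exists es : seq {set V},
    all (is_edge adj) es /\
    let L' := flips adj es L in
    [/\ in_Gamma adj L' g1, in_Gamma adj L' g2 &
        exists g3 : subgraph V,
          [/\ in_Gamma adj L' g3, cyc_adjacent adj g3 g1 & cyc_adjacent adj g3 g2]].

Lemma goal_direct L g1 g2 c : in_Gamma adj L g1 -> in_Gamma adj L g2 -> in_Gamma adj L c ->
  cyc_adjacent adj c g1 -> cyc_adjacent adj c g2 -> GOAL L g1 g2.
Proof. by move=> h1 h2 h3 a1 a2; exists [::]; split=> //; split=> //; exists c. Qed.

Lemma goal_flip L e g1 g2 : is_edge adj e -> GOAL (flip adj e L) g1 g2 -> GOAL L g1 g2.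
Proof.
move=> he [es [hes H]]; exists (rcons es e); split.
  by rewrite all_rcons he.
by rewrite /flips foldr_rcons.
Qed.

Lemma main_ind n : forall L g1 g2 cs, valid adj L -> in_Gamma adj L g1 -> in_Gamma adj L g2 ->
  ~ cyc_adjacent adj g1 g2 -> chain L g1 cs g2 -> size cs <= n -> GOAL L g1 g2.
Proof.
elim: n => [|n IH] L g1 g2 cs vL g1G g2G nadj ch sz.
  by case: cs ch sz => [ch _|c cs _ //]; case: nadj.
have IH' : forall cs', chain L g1 cs' g2 -> size cs' <= n -> GOAL L g1 g2.
  by move=> cs'; apply: IH.
case: cs ch sz => [ch _|c1 [|c2 rest]]; first by case: nadj.
  by case=> c1G a1 a2 _; apply: (goal_direct g1G g2G c1G (cyc_adj_sym a1) a2).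
case=> c1G a1 [c2G a12 chr] sz.
have szr : size rest < n by move: sz => /=; rewrite !ltnS.
case: (Classical_Prop.classic (cyc_adjacent adj g1 c2)) => [a2|na2].
  by apply: (IH' (c2 :: rest)).
case: (eqVneq c1 c2) => [E|ne12].
  by subst c2; apply: (IH' (c1 :: rest)).
case: a12 => e [he [f1 f1c1 f1e] [f2 f2c2 f2e]].
case: (inG_comp c1G) => x1 [v1 c1E]; case: (inG_comp c2G) => x2 [v2 c2E].
case: (L2_edge_nonempty (ce_L2 f1e)) => z1 z1f.
case: (L2_edge_nonempty (ce_L2 f2e)) => z2 z2f.
have z1c1 : z1 \in c1.1.
  by rewrite c1E in f1c1 *; apply: (subsetP (comp2_sub f1c1)).
have z2c2 : z2 \in c2.1.
  by rewrite c2E in f2c2 *; apply: (subsetP (comp2_sub f2c2)).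
have z1v : z1 \in clique_verts e by apply: (subsetP (ce_sub f1e)).
have z2v : z2 \in clique_verts e by apply: (subsetP (ce_sub f2e)).
have c1z := inG_mem c1G z1c1.
have c2z := inG_mem c2G z2c2.
have nc : ~~ connect (orel L) z1 z2.
  by apply/negP => c; move: ne12; rewrite c1z c2z (comp_eq c) eqxx.
have g1out : forall y, y \in g1.1 -> y \notin clique_verts e.
  move=> y yg; apply/negP => yv; apply: na2.
  exact: (adj_shared vL g1G c2G he yg yv z2c2 z2v).
case: (Classical_Prop.classic (exists y, y \in g2.1 /\ y \in clique_verts e)) => [[y [yg yv]]|ng2].
  apply: (goal_direct g1G g2G c1G (cyc_adj_sym a1)).
  exact: (adj_shared vL c1G g2G he z1c1 z1v yg yv).
have g2out : forall y, y \in g2.1 -> y \notin clique_verts e.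
  by move=> y yg; apply/negP => yv; apply: ng2; exists y.
case: (Classical_Prop.classic (exists c, c \in rest /\ exists y, y \in c.1 /\ y \in clique_verts e))
  => [[c [cr [y [yc yv]]]]|nr].
  case/splitPr: cr chr szr => r1 r2 chr szr.
  have [cG ch2] := chain_suffix chr.
  apply: (IH' (c1 :: c :: r2)); last by move: szr; rewrite size_cat /= => h; apply: leq_trans h; rewrite ltnS leq_addl.
  by split => //; split => //; apply: (adj_shared vL c1G cG he z1c1 z1v yc yv).
have rout : forall c, c \in rest -> forall y, y \in c.1 -> y \notin clique_verts e.
  by move=> c cr y yc; apply/negP => yv; apply: nr; exists c; split=> //; exists y.
apply: (goal_flip he).
pose L' := flip adj e L.
have vL' : valid adj L' by apply: valid_flip.
have g1G' := pres g1G g1out.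
have g2G' := pres g2G g2out.
have v1z : L2_vertex z1 by apply: (inG_L2v c1G z1c1).
pose g3 := compg L' z1.
have g3G : in_Gamma adj L' g3 by apply: comp_inG.
have sub1 : c1.1 \subset g3.1.
  apply/subsetP => y; rewrite c1z !inE => c.
  by apply: (merge vL he z1v z2v nc); rewrite c.
have sub2 : c2.1 \subset g3.1.
  apply/subsetP => y; rewrite c2z !inE => c.
  by apply: (merge vL he z1v z2v nc); rewrite c orbT.
have a13 : cyc_adjacent adj g1 g3 by apply: (adj_transfer g1G c1G g3G sub1 g1out a1).
apply: (IH L' g1 g2 (g3 :: rest)) => //.
have chr' : chain L' c2 rest g2.
  by apply: (chain_flip chr) => c cr cG; apply: pres cG (rout c cr).
rewrite /=; split => //.
case: rest chr chr' rout szr {nr sz} => [|c3 rest'] /= chr chr' rout szr.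
  apply: cyc_adj_sym; apply: (adj_transfer g2G c2G g3G sub2 g2out (cyc_adj_sym chr)).
case: chr' => c3G' a23 ch3'; case: chr => c3G _ _; split => //.
apply: cyc_adj_sym; apply: (adj_transfer c3G c2G g3G sub2 _ (cyc_adj_sym a23)).
by apply: rout; rewrite mem_head.
Qed.

Lemma final L g1 g2 : valid adj L -> in_Gamma adj L g1 -> in_Gamma adj L g2 ->
  ~ cyc_adjacent adj g1 g2 -> GOAL L g1 g2.
Proof.
move=> vL g1G g2G nadj; case: (chain_exists vL g1G g2G) => cs ch.
exact: (main_ind vL g1G g2G nadj ch (leqnn _)).
Qed.
End G.

Theorem proposition2p21 (V : finType) (adj : rel V)
  (Hsimple : simple_graph adj) (Hconn : connected_graph adj)
  (Hbridge : bridgeless adj) (Htri : triangle_free adj) (Hcubic : cubic adj)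
  (L : labeling V) (HL : valid adj L)
  (g1 g2 : subgraph V)
  (Hg1 : in_Gamma adj L g1) (Hg2 : in_Gamma adj L g2)
  (Hnadj : ~ cyc_adjacent adj g1 g2) :
  exists es : seq {set V},
    all (is_edge adj) es /\
    let L' := flips adj es L in
    [/\ in_Gamma adj L' g1, in_Gamma adj L' g2 &
        exists g3 : subgraph V,
          [/\ in_Gamma adj L' g3, cyc_adjacent adj g3 g1 & cyc_adjacent adj g3 g2]].
Proof.
case: Hsimple => Hsym Hirr.
exact: (final Hsym Hirr Htri Hcubic Hconn HL Hg1 Hg2 Hnadj).
Qed.
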